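(* Let $n\ge 3$ and let $K_n$ be the complete graph on $n$ vertices with every edge having conductance $1$. Let $r\ne s$ be vertices, let $R_{rs}$ be the effective resistance between $r$ and $s$ in $K_n$, and let $(a,b)$ be an edge. Let $R'_{rs}$ be the effective resistance between $r$ and $s$ after the edge $(a,b)$ is altered, and write $R'_{rs}=R_{rs}-\Delta$. (1) If the resistance of $(a,b)$ goes to $0$ (its conductance tends to $+\infty$, with $R'_{rs}$ understood as the limit), then $\Delta=\frac{2}{n}$ if $\{a,b\}=\{r,s\}$; $\Delta=\frac{1}{2n}$ if $\{a,b\}$ and $\{r,s\}$ share exactly one vertex; and $\Delta=0$ if $\{a,b\}\cap\{r,s\}=\emptyset$. (2) If the resistance of $(a,b)$ goes to $+\infty$ (the edge is removed), then $\Delta=-\frac{4}{n(n-2)}$ if $\{a,b\}=\{r,s\}$; $\Delta=-\frac{1}{n(n-2)}$ if $\{a,b\}$ and $\{r,s\}$ share exactly one vertex; and $\Delta=0$ if $\{a,b\}\cap\{r,s\}=\emptyset$.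
   Context: For vertices $r,s$ of an electrical network (a graph with edge conductances), the effective resistance between them is the reciprocal of the net current flowing through the network when a unit voltage difference is applied between $r$ and $s$. *)

(* Defs.v *)
From HB Require Import structures.
From mathcomp Require Import all_boot all_order all_algebra.
From mathcomp Require Import all_classical all_reals all_analysis.
Set Implicit Arguments. Unset Strict Implicit. Unset Printing Implicit Defensive.
Import Order.TTheory GRing.Theory Num.Theory.
Local Open Scope ring_scope.
Local Open Scope classical_set_scope.

(* An electrical network on a finite vertex type V is given by a
   (symmetric) conductance function c : V -> V -> R; c x y = 0 means no edge. *)

Definition unit_potential (R : realType) (V : finType) (c : V -> V -> R)
    (r s : V) (v : V -> R) : Prop :=
  [/\ v r = 1, v s = 0 &
      forall x, x != r -> x != s -> \sum_(y : V) c x y * (v x - v y) = 0].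

Definition net_current (R : realType) (V : finType) (c : V -> V -> R)
    (r : V) (v : V -> R) : R :=
  \sum_(y : V) c r y * (v r - v y).

Definition is_eff_res (R : realType) (V : finType) (c : V -> V -> R)
    (r s : V) (Reff : R) : Prop :=
  exists v, unit_potential c r s v /\ Reff = (net_current c r v)^-1.

(* The effective resistance (as a number): the value Reff such that
   is_eff_res holds (it exists and is unique for connected networks). *)
Definition eff_res (R : realType) (V : finType) (c : V -> V -> R)
    (r s : V) : R :=
  xget 0 [set Reff | is_eff_res c r s Reff].

Definition KN (R : realType) (n : nat) : 'I_n -> 'I_n -> R :=
  fun x y => (x != y)%:R.

Definition KN_alter (R : realType) (n : nat) (a b : 'I_n) (t : R)
    : 'I_n -> 'I_n -> R :=
  fun x y => if ([set x; y] == [set a; b])%SET then t else KN R x y.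

(* Main.v *)
Require Import Defs.
From HB Require Import structures.
From mathcomp Require Import all_boot all_order all_algebra.
From mathcomp Require Import all_classical all_reals all_analysis.
From mathcomp Require Import ring lra.
Import Order.TTheory GRing.Theory Num.Theory.
Local Open Scope classical_set_scope.
Local Open Scope ring_scope.

Lemma set2_eqE (n : nat) (a b x y : 'I_n) : a != b ->
  ([set x; y] == [set a; b])%SET = ((x == a) && (y == b)) || ((x == b) && (y == a)).
Proof.
move=> ab; apply/idP/idP.
- move/eqP=> E.
  have xab : x \in [set a; b]%SET by rewrite -E !inE eqxx.
  have aXY : a \in [set x; y]%SET by rewrite E !inE eqxx.
  have bXY : b \in [set x; y]%SET by rewrite E !inE eqxx orbT.
  move: xab aXY bXY; rewrite !inE => /orP[]/eqP xE; subst x.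
  + move=> _ /orP[/eqP ba|/eqP->]; last by rewrite !eqxx.
    by rewrite ba eqxx in ab.
  + move=> /orP[/eqP ab'|/eqP->] _; last by rewrite !eqxx orbT.
    by rewrite ab' eqxx in ab.
- case/orP=> /andP[/eqP-> /eqP->] //; by rewrite finset.setUC.
Qed.

Lemma KN_alterE (R : realType) (n : nat) (a b x y : 'I_n) (t : R) : a != b ->
  KN_alter a b t x y = (x != y)%:R + (t - 1) * (((x == a) && (y == b)) || ((x == b) && (y == a)))%:R.
Proof.
move=> ab; rewrite /KN_alter /KN set2_eqE //.
case: ifP => [/orP[]/andP[/eqP-> /eqP->]|_]; last by rewrite mulr0 addr0.
- by rewrite ab -[true%:R]/(1 : R); ring.
- by rewrite eq_sym ab -[true%:R]/(1 : R); ring.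
Qed.

Lemma sum_ind (R : realType) (n : nat) (b : 'I_n) (F : 'I_n -> R) :
  \sum_(y : 'I_n) (y == b)%:R * F y = F b.
Proof.
rewrite (bigD1 b) //= eqxx mul1r big1 ?addr0 // => y /negbTE ->; by rewrite mul0r.
Qed.

Lemma flowE (R : realType) (n : nat) (a b x : 'I_n) (t : R) (v : 'I_n -> R) : a != b ->
  \sum_(y : 'I_n) KN_alter a b t x y * (v x - v y) =
  n%:R * v x - \sum_(y : 'I_n) v y +
  (t - 1) * (if x == a then v a - v b else if x == b then v b - v a else 0).
Proof.
move=> ab.
under eq_bigr => y _ do rewrite KN_alterE // mulrDl.
rewrite big_split /=.
have -> : \sum_(y : 'I_n) (x != y)%:R * (v x - v y) = \sum_(y : 'I_n) (v x - v y).
  apply: eq_bigr => y _; case: eqP => [->|_]; by rewrite ?subrr ?mulr0 ?mul1r.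
rewrite sumrB sumr_const card_ord mulr_natl; congr (_ + _).
under eq_bigr => y _ do rewrite -mulrA.
rewrite -mulr_sumr; congr (_ * _).
case: (eqVneq x a) => [->|xa].
  under eq_bigr => y _ do rewrite (negbTE ab) andTb andFb orbF.
  by rewrite sum_ind.
case: (eqVneq x b) => [->|xb].
  under eq_bigr => y _ do rewrite ?eqxx ?andTb ?andFb ?orFb.
  by rewrite sum_ind.
by rewrite big1 // => y _; rewrite ?(negbTE xb) mul0r.
Qed.
Lemma eff_res_eq (R : realType) (V : finType) (c : V -> V -> R) (r s : V) (v : V -> R) :
  (forall x y, c x y = c y x) -> (forall x y, 0 <= c x y) ->
  (forall z, z != r -> z != s -> 0 < c z r \/ 0 < c z s) ->
  unit_potential c r s v -> eff_res c r s = (net_current c r v)^-1.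
Proof.
move=> csym cge0 cpos hv.
rewrite /eff_res; apply: xget_unique; first by exists v.
move=> Re [v' [hv' ->]].
suff -> : v' = v by [].
apply/funext => z.
case: hv => vr vs kv; case: hv' => v'r v's kv'.
pose w x := v' x - v x.
have wr : w r = 0 by rewrite /w vr v'r subrr.
have ws : w s = 0 by rewrite /w vs v's subrr.
have hz : forall x, w x * \sum_y c x y * (w x - w y) = 0.
  move=> x; case: (eqVneq x r) => [->|xr]; first by rewrite wr mul0r.
  case: (eqVneq x s) => [->|xs]; first by rewrite ws mul0r.
  have -> : \sum_y c x y * (w x - w y) =
     \sum_y c x y * (v' x - v' y) - \sum_y c x y * (v x - v y).
    rewrite -sumrB; apply: eq_bigr => y _; rewrite /w; ring.
  by rewrite kv // kv' // subrr mulr0.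
have E1 : \sum_x \sum_y c x y * w x * (w x - w y) = 0.
  rewrite big1 // => x _; rewrite -[RHS](hz x) mulr_sumr.
  by apply: eq_bigr => y _; ring.
have E2 : \sum_x \sum_y c x y * w y * (w y - w x) = 0.
  rewrite exchange_big /= -[RHS]E1; apply: eq_bigr => x _; apply: eq_bigr => y _.
  by rewrite csym.
have E0 : \sum_x \sum_y c x y * (w x - w y)^+2 = 0.
  transitivity (\sum_x \sum_y c x y * w x * (w x - w y) +
                \sum_x \sum_y c x y * w y * (w y - w x)); last by rewrite E1 E2 addr0.
  rewrite -big_split; apply: eq_bigr => x _; rewrite -big_split; apply: eq_bigr => y _ /=; ring.
have T : forall x y, c x y * (w x - w y)^+2 = 0.
  have h0 : forall x y, 0 <= c x y * (w x - w y)^+2.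
    by move=> x y; apply: mulr_ge0 (cge0 _ _) (sqr_ge0 _).
  move=> x y.
  apply: (@psumr_eq0P _ _ xpredT (fun y => c x y * (w x - w y)^+2) (fun y _ => h0 x y) _ y isT).
  exact: (@psumr_eq0P _ _ xpredT (fun x => \sum_y c x y * (w x - w y)^+2)
     (fun x _ => sumr_ge0 _ (fun y _ => h0 x y)) E0 x isT).
have wz : w z = 0.
  case: (eqVneq z r) => [->//|zr]; case: (eqVneq z s) => [->//|zs].
  case: (cpos z zr zs) => cz.
    by move/eqP: (T z r); rewrite mulf_eq0 (gt_eqF cz) /= sqrf_eq0 wr subr0 => /eqP.
  by move/eqP: (T z s); rewrite mulf_eq0 (gt_eqF cz) /= sqrf_eq0 ws subr0 => /eqP.
by apply/eqP; rewrite -subr_eq0; apply/eqP.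
Qed.

Lemma lim_aux (R : realType) (f : R -> R) (L K c : R) : 0 < c ->
  (forall t, 0 <= t -> f t = L + K / (t + c)) -> f t @[t --> +oo] --> (L : R^o).
Proof.
move=> c0 hf; apply/cvgrPdist_lt => e e0.
exists (`|K| / e); split; first exact: num_real.
move=> t Kt.
have t0 : 0 <= t by apply: le_trans (ltW Kt); apply: divr_ge0 => //; exact: ltW.
have tc : 0 < t + c by lra.
rewrite hf // opprD addrA subrr sub0r normrN normrM normfV (gtr0_norm tc).
rewrite ltr_pdivrMr //.
move: Kt; rewrite ltr_pdivrMr // => Kt.
have : 0 < e * c by apply: mulr_gt0.
nra.
Qed.

Lemma card_I2 (n : nat) (a b : 'I_n) (S : {set 'I_n}) : a != b ->
  #|[set a; b] :&: S|%SET = ((a \in S) + (b \in S))%N.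
Proof.
move=> ab.
have c1 : forall x : 'I_n, #|[set x] :&: S| = (x \in S).
  move=> x; case: (boolP (x \in S)) => h.
    by rewrite (finset.setIidPl _) ?cards1 // finset.sub1set.
  have -> : [set x] :&: S = finset.set0.
    by apply/setP => y; rewrite !inE; case: eqP => // ->; rewrite (negbTE h).
  by rewrite cards0.
rewrite finset.setIUl cardsU !c1.
have -> : ([set a] :&: S) :&: ([set b] :&: S) = finset.set0.
  apply/setP => y; rewrite !inE; case: (eqVneq y a) => [->|] /=; last by [].
  by rewrite (negbTE ab) andbF.


by rewrite cards0 subn0.
Qed.

Lemma KN_alterC (R : realType) (n : nat) (a b : 'I_n) (t : R) :
  KN_alter a b t = KN_alter b a t.
Proof.
apply/funext => x; apply/funext => y; rewrite /KN_alter.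
by have -> : [set b; a]%SET = [set a; b]%SET :> {set 'I_n} by rewrite finset.setUC.
Qed.

Lemma KN_alter1 (R : realType) (n : nat) (a b : 'I_n) : a != b ->
  @KN R n = KN_alter a b 1.
Proof.
move=> ab; apply/funext => x; apply/funext => y; rewrite /KN_alter /KN.
case: ifP => //; rewrite set2_eqE // => /orP[]/andP[/eqP-> /eqP->] //.
  by rewrite ab.
by rewrite eq_sym ab.
Qed.

Lemma KN_alter_eff (R : realType) (n : nat) (a b r s : 'I_n) (t : R) (v : 'I_n -> R) :
  a != b -> r != s -> 0 <= t -> unit_potential (KN_alter a b t) r s v ->
  eff_res (KN_alter a b t) r s = (net_current (KN_alter a b t) r v)^-1.
Proof.
move=> ab rs t0; apply: eff_res_eq.
- move=> x y; rewrite /KN_alter /KN (eq_sym x y).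
  by have -> : [set y; x]%SET = [set x; y]%SET :> {set 'I_n} by rewrite finset.setUC.
- by move=> x y; rewrite /KN_alter /KN; case: ifP.
- move=> z zr zs; rewrite /KN_alter /KN.
  case: ifP => [/eqP h1|_]; last by left; rewrite zr.
  right; case: ifP => [/eqP h2|_]; last by rewrite zs.
  have : r \in [set z; s]%SET by rewrite h2 -h1 !inE eqxx orbT.
  by rewrite !inE (negbTE rs) orbF eq_sym (negbTE zr).
Qed.

Definition pot {R : realType} {n : nat} (q al be ga : R) (r s b : 'I_n) : 'I_n -> R :=
  fun y => q + al * (y == r)%:R + be * (y == s)%:R + ga * (y == b)%:R.

Lemma sum_pot (R : realType) (n : nat) (q al be ga : R) (r s b : 'I_n) :
  \sum_(y : 'I_n) pot q al be ga r s b y = n%:R * q + al + be + ga.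
Proof.
rewrite /pot !big_split /= sumr_const card_ord mulr_natl.
have h : forall (c : R) (u : 'I_n), \sum_(y : 'I_n) c * (y == u)%:R = c.
  move=> c u; under eq_bigr => y _ do rewrite mulrC.
  exact: (@sum_ind R n u (fun _ => c)).
by rewrite !h.
Qed.

Lemma reffA (R : realType) (n : nat) (r s : 'I_n) (t : R) : (3 <= n)%N -> r != s -> 0 <= t ->
  eff_res (KN_alter r s t) r s = 2 / (2 * t + n%:R - 2).
Proof.
move=> n3 rs t0.
have n3R : (3 : R) <= n%:R by rewrite ler_nat.
have sr : (s == r) = false by rewrite eq_sym (negbTE rs).
pose v : 'I_n -> R := pot (1/2) (1/2) (-(1/2)) 0 r s r.
rewrite (@KN_alter_eff R n r s r s t v) //.
- rewrite /net_current flowE // sum_pot eqxx /v /pot !eqxx ?sr (negbTE rs) /=.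
  field; lra.
- split.
  + by rewrite /v /pot !eqxx (negbTE rs) /=; field.
  + by rewrite /v /pot !eqxx ?sr /=; field.
  + move=> x xr xs; rewrite flowE // sum_pot /v /pot !eqxx ?sr (negbTE rs) (negbTE xr) (negbTE xs) /=.
    by field.
Qed.

Lemma reffB (R : realType) (n : nat) (a b r s : 'I_n) (t : R) : (3 <= n)%N -> r != s ->
  a != b -> 0 <= t -> a != r -> a != s -> b != r -> b != s ->
  eff_res (KN_alter a b t) r s = 2 / n%:R.
Proof.
move=> n3 rs ab t0 ar as_ br bs.
have n3R : (3 : R) <= n%:R by rewrite ler_nat.
have sr : (s == r) = false by rewrite eq_sym (negbTE rs).
pose v : 'I_n -> R := pot (1/2) (1/2) (-(1/2)) 0 r s r.
have vo : forall x, x != r -> x != s -> v x = 1/2.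
  by move=> x xr xs; rewrite /v /pot (negbTE xr) (negbTE xs) /=; field.
rewrite (@KN_alter_eff R n a b r s t v) //.
- rewrite /net_current flowE // sum_pot eq_sym (negbTE ar) eq_sym (negbTE br).
  rewrite /v /pot !eqxx ?sr (negbTE rs) /=.
  field; lra.
- split.
  + by rewrite /v /pot !eqxx (negbTE rs) /=; field.
  + by rewrite /v /pot !eqxx ?sr /=; field.
  + move=> x xr xs; rewrite flowE // sum_pot vo // (vo a) // (vo b) // !subrr !if_same.
    by field.
Qed.

Lemma reffC1 (R : realType) (n : nat) (b r s : 'I_n) (t : R) : (3 <= n)%N -> r != s ->
  0 <= t -> b != r -> b != s ->
  eff_res (KN_alter r b t) r s =
    (3 * t + 2 * n%:R - 3) / (n%:R * (2 * t + n%:R - 2)).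
Proof.
move=> n3 rs t0 br bs.
have n3R : (3 : R) <= n%:R by rewrite ler_nat.
have sr : (s == r) = false by rewrite eq_sym (negbTE rs).
have rb : (r == b) = false by rewrite eq_sym (negbTE br).
have sb : (s == b) = false by rewrite eq_sym (negbTE bs).
have rb' : r != b by rewrite rb.
pose D : R := 3 * t + 2 * n%:R - 3.
pose p : R := (3 * t + n%:R - 3) / D.
pose q : R := (2 * t + n%:R - 2) / D.
have D0 : D != 0 by rewrite /D; apply/eqP; lra.
pose v : 'I_n -> R := pot q (1 - q) (- q) (p - q) r s b.
rewrite (@KN_alter_eff R n r b r s t v) //.
- rewrite /net_current flowE // sum_pot eqxx.
  rewrite /v /pot !eqxx ?sr (negbTE rs) ?rb (negbTE br) (negbTE bs) /=.
  rewrite [X in X^-1 = _](_ : _ = n%:R * (2 * t + n%:R - 2) / D).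
    by rewrite invf_div.
  rewrite /p /q /D; field; lra.
- split.
  + by rewrite /v /pot !eqxx (negbTE rs) ?rb /=; ring.
  + by rewrite /v /pot !eqxx ?sr ?sb /=; ring.
  + move=> x xr xs; rewrite flowE // sum_pot (negbTE xr).
    case: (eqVneq x b) => [->|xb].
      rewrite /v /pot ?eqxx (negbTE br) (negbTE bs) ?rb (negbTE rs) /=.
      by rewrite /p /q /D; field; lra.
    rewrite /v /pot (negbTE xr) (negbTE xs) (negbTE xb) /=.
    by rewrite /p /q /D; field; lra.
Qed.

Lemma reffC2 (R : realType) (n : nat) (b r s : 'I_n) (t : R) : (3 <= n)%N -> r != s ->
  0 <= t -> b != r -> b != s ->
  eff_res (KN_alter s b t) r s =
    (3 * t + 2 * n%:R - 3) / (n%:R * (2 * t + n%:R - 2)).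
Proof.
move=> n3 rs t0 br bs.
have n3R : (3 : R) <= n%:R by rewrite ler_nat.
have sr : (s == r) = false by rewrite eq_sym (negbTE rs).
have rb : (r == b) = false by rewrite eq_sym (negbTE br).
have sb : (s == b) = false by rewrite eq_sym (negbTE bs).
have sb' : s != b by rewrite sb.
pose D : R := 3 * t + 2 * n%:R - 3.
pose p : R := (3 * t + n%:R - 3) / D.
pose q : R := (2 * t + n%:R - 2) / D.
have D0 : D != 0 by rewrite /D; apply/eqP; lra.
pose v : 'I_n -> R := pot (1 - q) q (q - 1) (q - p) r s b.
rewrite (@KN_alter_eff R n s b r s t v) //.
- rewrite /net_current flowE // sum_pot (negbTE rs) rb.
  rewrite /v /pot !eqxx ?sr (negbTE rs) ?rb /=.
  rewrite [X in X^-1 = _](_ : _ = n%:R * (2 * t + n%:R - 2) / D).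
    by rewrite invf_div.
  rewrite /p /q /D; field; lra.
- split.
  + by rewrite /v /pot !eqxx (negbTE rs) ?rb /=; ring.
  + by rewrite /v /pot !eqxx ?sr ?sb /=; ring.
  + move=> x xr xs; rewrite flowE // sum_pot (negbTE xs).
    case: (eqVneq x b) => [->|xb].
      rewrite /v /pot ?eqxx (negbTE br) (negbTE bs) ?sb ?sr /=.
      by rewrite /p /q /D; field; lra.
    rewrite /v /pot (negbTE xr) (negbTE xs) (negbTE xb) /=.
    by rewrite /p /q /D; field; lra.
Qed.

Ltac sidec := repeat (apply/andP; split); try (apply/eqP; lra).

Definition GoalShape {R : realType} {n : nat} (r s a b : 'I_n) (E : R -> R) : Prop :=
  [/\ ([set a; b]%SET = [set r; s]%SET ->
         E t @[t --> +oo] --> E 1 - 2 / n%:R),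
      (#|([set a; b] :&: [set r; s])%SET| = 1%N ->
         E t @[t --> +oo] --> E 1 - 1 / (2 * n%:R)) &
      (#|([set a; b] :&: [set r; s])%SET| = 0%N ->
         E t @[t --> +oo] --> E 1 - 0)]
  /\
  [/\ ([set a; b]%SET = [set r; s]%SET ->
         E 0 = E 1 - - (4 / (n%:R * (n%:R - 2)))),
      (#|([set a; b] :&: [set r; s])%SET| = 1%N ->
         E 0 = E 1 - - (1 / (n%:R * (n%:R - 2)))) &
      (#|([set a; b] :&: [set r; s])%SET| = 0%N ->
         E 0 = E 1 - 0)].

Lemma goalA (R : realType) (n : nat) (r s a b : 'I_n) (E : R -> R) :
  (3 <= n)%N -> r != s -> [set a; b]%SET = [set r; s]%SET ->
  (forall t, 0 <= t -> E t = 2 / (2 * t + n%:R - 2)) -> GoalShape r s a b E.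
Proof.
move=> n3 rs hab hE.
have n3R : (3 : R) <= n%:R by rewrite ler_nat.
have hc : #|([set a; b] :&: [set r; s])%SET| = 2%N.
  by rewrite hab finset.setIid cards2 rs.
clear hab.
have c0 : 0 < (n%:R - 2) / 2 :> R by lra.
split; split; rewrite ?hc //.
- move=> _; apply: (@lim_aux R E _ 1 ((n%:R - 2) / 2)); first exact: c0.
  move=> t t0; rewrite !hE //; field; lra.
- by move=> _; rewrite !hE //; field; sidec.
Qed.

Lemma goalB (R : realType) (n : nat) (r s a b : 'I_n) (E : R -> R) :
  (3 <= n)%N -> r != s -> #|([set a; b] :&: [set r; s])%SET| = 0%N ->
  (forall t, 0 <= t -> E t = 2 / n%:R) -> GoalShape r s a b E.
Proof.
move=> n3 rs hc hE.
have n3R : (3 : R) <= n%:R by rewrite ler_nat.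
have hab : [set a; b]%SET <> [set r; s]%SET.
  by move=> hab; move: hc; rewrite hab finset.setIid cards2 rs.
split; split; rewrite ?hc // => _.
- apply: (@lim_aux R E _ 0 1); first lra.
  by move=> t t0; rewrite !hE // mul0r addr0 subr0.
- by rewrite !hE // subr0.
Qed.

Lemma goalC (R : realType) (n : nat) (r s a b : 'I_n) (E : R -> R) :
  (3 <= n)%N -> r != s -> #|([set a; b] :&: [set r; s])%SET| = 1%N ->
  (forall t, 0 <= t -> E t = (3 * t + 2 * n%:R - 3) / (n%:R * (2 * t + n%:R - 2))) ->
  GoalShape r s a b E.
Proof.
move=> n3 rs hc hE.
have n3R : (3 : R) <= n%:R by rewrite ler_nat.
have hab : [set a; b]%SET <> [set r; s]%SET.
  by move=> hab; move: hc; rewrite hab finset.setIid cards2 rs.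
have c0 : 0 < (n%:R - 2) / 2 :> R by lra.
split; split; rewrite ?hc // => _.
- apply: (@lim_aux R E _ (1/4) ((n%:R - 2) / 2)); first exact: c0.
  by move=> t t0; rewrite !hE //; field; sidec.
- by rewrite !hE //; field; sidec.
Qed.

Theorem lemmaB1 (R : realType) (n : nat) (r s a b : 'I_n) :
  (3 <= n)%N -> r != s -> a != b ->
  let Rrs := eff_res (@KN R n) r s in
  let Rshort := fun t : R => eff_res (KN_alter a b t) r s in
  let Rcut := eff_res (KN_alter a b (0 : R)) r s in
  (* (1) the resistance of (a,b) goes to 0: conductance t -> +oo *)
  [/\ ([set a; b]%SET = [set r; s]%SET ->
         Rshort t @[t --> +oo] --> Rrs - 2 / n%:R),
      (#|([set a; b] :&: [set r; s])%SET| = 1%N ->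
         Rshort t @[t --> +oo] --> Rrs - 1 / (2 * n%:R)) &
      (#|([set a; b] :&: [set r; s])%SET| = 0%N ->
         Rshort t @[t --> +oo] --> Rrs - 0)]
  /\
  (* (2) the resistance of (a,b) goes to +oo: the edge is removed *)
  [/\ ([set a; b]%SET = [set r; s]%SET ->
         Rcut = Rrs - - (4 / (n%:R * (n%:R - 2)))),
      (#|([set a; b] :&: [set r; s])%SET| = 1%N ->
         Rcut = Rrs - - (1 / (n%:R * (n%:R - 2)))) &
      (#|([set a; b] :&: [set r; s])%SET| = 0%N ->
         Rcut = Rrs - 0)].
Proof.
move=> n3 rs ab Rrs Rshort Rcut.
rewrite {}/Rrs {}/Rshort {}/Rcut (@KN_alter1 R n a b ab).
pose E := fun t : R => eff_res (KN_alter a b t) r s.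
change (GoalShape r s a b E).
have sr : s != r by rewrite eq_sym.
have cI : #|([set a; b] :&: [set r; s])%SET| =
          ((a \in [set r; s]%SET) + (b \in [set r; s]%SET))%N by apply: card_I2.
case: (eqVneq a r) => [ar|ar].
  subst a; case: (eqVneq b s) => [bs|bs].
    subst b; apply: goalA => // t t0; exact: reffA.
  have br : b != r by rewrite eq_sym.
  apply: goalC => //; first by rewrite cI !inE eqxx (negbTE br) (negbTE bs).
  by move=> t t0; apply: reffC1.
case: (eqVneq a s) => [as_|as_].
  subst a; case: (eqVneq b r) => [br|br].
    subst b; apply: goalA => //; first by rewrite finset.setUC.
    by move=> t t0; rewrite /E KN_alterC; exact: reffA.
  have bs : b != s by rewrite eq_sym.
  apply: goalC => //; first by rewrite cI !inE eqxx (negbTE br) (negbTE bs) orbT.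
  by move=> t t0; apply: reffC2.
case: (eqVneq b r) => [br|br].
  subst b.
  apply: goalC => //; first by rewrite cI !inE eqxx (negbTE ar) (negbTE as_).
  by move=> t t0; rewrite /E KN_alterC; apply: reffC1.
case: (eqVneq b s) => [bs|bs].
  subst b.
  apply: goalC => //; first by rewrite cI !inE eqxx (negbTE ar) (negbTE as_) orbT.
  by move=> t t0; rewrite /E KN_alterC; apply: reffC2.
apply: goalB => //; first by rewrite cI !inE (negbTE ar) (negbTE as_) (negbTE br) (negbTE bs).
by move=> t t0; apply: reffB.
Qed.
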